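(* For all integers $n\geq1$ and all $i,j\in\mathbb N$ the following polynomial identities hold: \begin{align*} U_{n+i}U_{n+j}-U_{n-1}U_{n+1+i+j}&=U_iU_j,\\ T_{n+i}T_{n+j}-T_{n-1}T_{n+1+i+j}&=(1-x^2)U_iU_j,\\ T_{n+i}U_{n+j}-U_{n-1}T_{n+1+i+j}&=T_iU_j,\\ T_{n+i}U_{n+j}-T_{n-1}U_{n+1+i+j}&=-U_iT_{j+2},\\ T_{n+i}T_{n+j}-(x^2-1)U_{n-1}U_{n-1+i+j}&=T_iT_j. \end{align*}
   Context: $T_n=T_n(x)$ and $U_n=U_n(x)$ denote the Chebyshev polynomials of the first and second kind, defined by $T_0=1$, $T_1=x$, $T_{n+1}=2xT_n-T_{n-1}$ and $U_0=1$, $U_1=2x$, $U_{n+1}=2xU_n-U_{n-1}$ for $n\geq1$. *)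

(* Defs.v *)
From mathcomp Require Import all_boot all_algebra.
Set Implicit Arguments. Unset Strict Implicit. Unset Printing Implicit Defensive.
Import GRing.Theory.
Local Open Scope ring_scope.

(* Chebyshev polynomials in {poly R}, R any commutative ring.
   cheb_pair a b n = (P_n, P_{n+1}) for the recurrence P_{n+2} = 2X P_{n+1} - P_n
   with P_0 = a, P_1 = b. *)
Fixpoint cheb_pair (R : comRingType) (a b : {poly R}) (n : nat) : {poly R} * {poly R} :=
  match n with
  | O => (a, b)
  | S m => let p := cheb_pair a b m in (p.2, 2%:R *: 'X * p.2 - p.1)
  end.

Definition chebT (R : comRingType) (n : nat) : {poly R} := (cheb_pair 1 'X n).1.
Definition chebU (R : comRingType) (n : nat) : {poly R} := (cheb_pair 1 (2%:R *: 'X) n).1.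

(* Main.v *)
Require Import Defs.
From mathcomp Require Import all_boot all_algebra.
From mathcomp Require Import ring.
Import GRing.Theory.
Local Open Scope ring_scope.

Section S.
Variable R : comRingType.
Local Notation T := (@chebT R).
Local Notation U := (@chebU R).

Lemma recU k : U k.+2 = 2%:R * 'X * U k.+1 - U k.
Proof. by rewrite /chebU /= -mul_polyC polyC_natr. Qed.
Lemma recT k : T k.+2 = 2%:R * 'X * T k.+1 - T k.
Proof. by rewrite /chebT /= -mul_polyC polyC_natr. Qed.
Lemma U0 : U 0 = 1. Proof. by []. Qed.
Lemma U1 : U 1 = 2%:R * 'X. Proof. by rewrite /chebU /= -mul_polyC polyC_natr. Qed.
Lemma T0 : T 0 = 1. Proof. by []. Qed.
Lemma T1 : T 1 = 'X. Proof. by []. Qed.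

Lemma TU2 k : T k = (1 - 2%:R * 'X ^+ 2) * U k + 'X * U k.+1.
Proof.
suff: T k = (1 - 2%:R * 'X ^+ 2) * U k + 'X * U k.+1 /\
      T k.+1 = (1 - 2%:R * 'X ^+ 2) * U k.+1 + 'X * U k.+2 by case.
elim: k => [|k [IH1 IH2]].
  by rewrite !recU U0 U1 T0 T1; split; ring.
split => //; rewrite recT IH1 IH2 !recU; ring.
Qed.

Lemma rec2 (f : nat -> {poly R}) (c : {poly R}) :
  (forall k, f k.+2 = c * f k.+1 - f k) -> f 0 = 0 -> f 1 = 0 -> forall k, f k = 0.
Proof.
move=> H h0 h1 k.
suff: f k = 0 /\ f k.+1 = 0 by case.
elim: k => [|k [IH1 IH2]]; first by [].
by split => //; rewrite H IH1 IH2 mulr0 subr0.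
Qed.

Ltac norm := rewrite ?addnS ?addSn ?addn0 ?add0n ?subSS ?subn0 ?recU ?recT ?U0 ?U1 ?T0 ?T1.

Ltac solve_d d m i tac :=
  apply: (@rec2 (d m i) (2%:R * 'X)); [move=> k; rewrite /d; norm; ring| |];
  [move: i; apply: (@rec2 (fun x => d m x 0) (2%:R * 'X)); [move=> k; rewrite /d; norm; ring| |]
  |move: i; apply: (@rec2 (fun x => d m x 1) (2%:R * 'X)); [move=> k; rewrite /d; norm; ring| |]];
  (elim: m => [|m]; [rewrite /d; norm; ring | move=> <-; rewrite /d; norm; tac; ring]).

Definition d1 m i j := U (m.+1 + i)%N * U (m.+1 + j)%N - U m * U (m.+1 + 1 + i + j)%N - U i * U j.
Lemma d1_0 m i j : d1 m i j = 0. Proof. solve_d d1 m i idtac. Qed.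
Definition d2 m i j := T (m.+1 + i)%N * T (m.+1 + j)%N - T m * T (m.+1 + 1 + i + j)%N - (1 - 'X ^+ 2) * U i * U j.
Lemma d2_0 m i j : d2 m i j = 0. Proof. solve_d d2 m i idtac. Qed.
Definition d3 m i j := T (m.+1 + i)%N * U (m.+1 + j)%N - U m * T (m.+1 + 1 + i + j)%N - T i * U j.
Lemma d3_0 m i j : d3 m i j = 0. Proof. solve_d d3 m i idtac. Qed.
Definition d4 m i j := T (m.+1 + i)%N * U (m.+1 + j)%N - T m * U (m.+1 + 1 + i + j)%N - - (U i * T (j + 2)%N).
Lemma d4_0 m i j : d4 m i j = 0. Proof. solve_d d4 m i idtac. Qed.
Definition d5 m i j := T (m.+1 + i)%N * T (m.+1 + j)%N - ('X ^+ 2 - 1) * U m * U (m.+1 - 1 + i + j)%N - T i * T j.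
Lemma d5_0 m i j : d5 m i j = 0. Proof. solve_d d5 m i ltac:(rewrite ?TU2; norm). Qed.
End S.

Theorem theorem2p1 (R : comRingType) (n i j : nat) (hn : (1 <= n)%N) :
  let T := @chebT R in let U := @chebU R in
  [/\ U (n + i)%N * U (n + j)%N - U n.-1 * U (n + 1 + i + j)%N = U i * U j,
      T (n + i)%N * T (n + j)%N - T n.-1 * T (n + 1 + i + j)%N = (1 - 'X ^+ 2) * U i * U j,
      T (n + i)%N * U (n + j)%N - U n.-1 * T (n + 1 + i + j)%N = T i * U j,
      T (n + i)%N * U (n + j)%N - T n.-1 * U (n + 1 + i + j)%N = - (U i * T (j + 2)%N)
    & T (n + i)%N * T (n + j)%N - ('X ^+ 2 - 1) * U n.-1 * U (n - 1 + i + j)%N = T i * T j].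
Proof.
case: n hn => // m _ T U /=.
split; apply/eqP; rewrite -subr_eq0; apply/eqP.
- exact: d1_0.
- exact: d2_0.
- exact: d3_0.
- exact: d4_0.
- exact: d5_0.
Qed.
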